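(* Let $Y$ be a $\mathbb{Q}$-vector space with an involution $y\mapsto\bar y$, and let $X^0_{(n)}=\sum_{w\in B_n,\ w_1<w_2<\dots<w_n}w\in\mathbb{Q}B_n$. Then for all $y_1,\dots,y_n\in Y$, $$(y_1\otimes\cdots\otimes y_n)\cdot X^0_{(n)}=\tau\Bigl(\cdots\tau\bigl(\tau(y_1)\,y_2\bigr)\,y_3\cdots y_n\Bigr).$$
   Context: $B_n$: signed permutations $w=w_1\dots w_n$ (bijections of $\{\pm1,\dots,\pm n\}$ with $w(-i)=-w(i)$), values ordered $\cdots<-2<-1<1<2<\cdots$. $B_n$ acts on $Y^{\otimes n}$ on the right by $(y_1\otimes\cdots\otimes y_n)\cdot w=y_{w_1}\otimes\cdots\otimes y_{w_n}$, where $y_{-i}$ means $\bar y_i$; this is extended linearly to $\mathbb{Q}B_n$. In the tensor algebra $TY=\bigoplus_{m\ge0}Y^{\otimes m}$, juxtaposition denotes the tensor product, and the symmetrizer $\tau:TY\to TY$ is the linear map $\tau(y_1\otimes\cdots\otimes y_m)=y_1\otimes\cdots\otimes y_m+\bar y_m\otimes\cdots\otimes\bar y_1$. *)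

(* Defs.v *)
From HB Require Import structures.
From mathcomp Require Import all_boot all_order all_algebra.
Set Implicit Arguments. Unset Strict Implicit. Unset Printing Implicit Defensive.
Import Order.TTheory GRing.Theory Num.Theory.
Local Open Scope ring_scope.

(* A signed permutation w of B_n is encoded as w : {ffun 'I_n -> 'I_n * bool}:
   w i = (k, b) means w_{i+1} = -(k+1) if b, and +(k+1) otherwise. *)
Definition sval (n : nat) (p : 'I_n * bool) : int :=
  if p.2 then - (p.1.+1)%:Z else (p.1.+1)%:Z.

Definition signed_perm (n : nat) (w : {ffun 'I_n -> 'I_n * bool}) : bool :=
  injectiveb (fun i => (w i).1).

Definition increasing_sp (n : nat) (w : {ffun 'I_n -> 'I_n * bool}) : bool :=
  [forall i : 'I_n, forall j : 'I_n, (i < j)%N ==> (sval (w i) < sval (w j))].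

(* Elements of the tensor algebra that are sums of pure tensors are encoded
   as formal sums (sequences) of words (seq Y). *)
Section Words.
Variable Y : lmodType rat.
Variable bar : Y -> Y.

Definition act_word (n : nat) (y : 'I_n -> Y) (w : {ffun 'I_n -> 'I_n * bool})
  : seq Y :=
  [seq (if (w i).2 then bar (y (w i).1) else y (w i).1) | i <- enum 'I_n].

Definition tau (s : seq (seq Y)) : seq (seq Y) :=
  flatten [seq [:: u; rev (map bar u)] | u <- s].

Definition tau_chain (x : Y) (rest : seq Y) : seq (seq Y) :=
  foldl (fun acc z => tau [seq rcons u z | u <- acc]) (tau [:: [:: x]]) rest.

End Words.

(* phi : words -> V is multilinear on words of length n; by the universal
   property of Y^{(x)n}, such phi are exactly the linear maps out of Y^{(x)n}. *)
Definition multilinear_on (Y V : lmodType rat) (n : nat) (phi : seq Y -> V) :=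
  forall (s : seq Y) (i : nat) (a : rat) (x z : Y),
    size s = n -> (i < n)%N ->
    phi (set_nth 0 s i (a *: x + z)) =
      a *: phi (set_nth 0 s i x) + phi (set_nth 0 s i z).

(* Main.v *)
Require Import Defs.
From HB Require Import structures.
From mathcomp Require Import all_boot all_order all_algebra.
Import GRing.Theory.
Local Open Scope ring_scope.

Fixpoint masks (k : nat) : seq (seq bool) :=
  if k is k'.+1 then
    flatten [seq [:: rcons m false; rcons (map negb m) true] | m <- masks k']
  else [:: [::]].

Definition Wd {Y : Type} (bar : Y -> Y) (xs : seq Y) (m : seq bool) : seq Y :=
  rev (map bar (mask m xs)) ++ mask (map negb m) xs.

Lemma masks_size k m : m \in masks k -> size m = k.
Proof.
elim: k m => [|k IH] m /=; first by rewrite inE => /eqP ->.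
case/flattenP => s /mapP [m0 Hm0 ->]; rewrite !inE => /orP [] /eqP ->;
by rewrite size_rcons ?size_map (IH _ Hm0).
Qed.

Lemma masks_mem k m : size m = k -> m \in masks k.
Proof.
elim: k m => [|k IH] m /=; first by move/eqP; rewrite size_eq0 => /eqP ->; rewrite inE.
case/lastP: m => [//|m b]; rewrite size_rcons => -[Hs].
apply/flattenP; case: b.
- exists [:: rcons (map negb m) false; rcons (map negb (map negb m)) true].
    by apply/mapP; exists (map negb m) => //; apply: IH; rewrite size_map.
  by rewrite (mapK negbK) !inE eqxx orbT.
- exists [:: rcons m false; rcons (map negb m) true].
    by apply/mapP; exists m => //; apply: IH.
  by rewrite !inE eqxx.
Qed.

Lemma uniq_flat2 (T : eqType) (a b : T -> T) (s : seq T) :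
  injective a -> injective b -> (forall x y, a x != b y) -> uniq s ->
  uniq (flatten [seq [:: a m; b m] | m <- s]).
Proof.
move=> ia ib ab; elim: s => [//|x s IH] /= /andP [xs us].
have memF z : z \in flatten [seq [:: a m; b m] | m <- s] ->
  exists2 m, m \in s & (z = a m \/ z = b m).
  case/flattenP => t /mapP [m Hm ->]; rewrite !inE => /orP [] /eqP ->.
    by exists m => //; left.
  by exists m => //; right.
rewrite !inE negb_or ab /= (IH us) andbT; apply/andP; split.
- apply/negP => /memF [m Hm [/ia E|E]]; last by move: (ab x m); rewrite E eqxx.
  by subst; rewrite Hm in xs.
- apply/negP => /memF [m Hm [E|/ib E]]; first by move: (ab m x); rewrite E eqxx.
  by subst; rewrite Hm in xs.
Qed.

Lemma masks_uniq k : uniq (masks k).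
Proof.
elim: k => [//|k IH] /=; apply: uniq_flat2 => //.
- by move=> x y /rcons_inj [].
- by move=> x y /rcons_inj [] /(inj_map negb_inj).
- by move=> x y; apply/eqP => /(congr1 (last false)); rewrite !last_rcons.
Qed.

Section Chain.
Variable Y : lmodType rat.
Variable bar : Y -> Y.
Hypothesis bar_invol : involutive bar.

Lemma chain_step (xs : seq Y) z k :
  size xs = k ->
  tau bar [seq rcons u z | u <- map (Wd bar xs) (masks k)] =
  map (Wd bar (rcons xs z)) (masks k.+1).
Proof.
move=> Hs; rewrite /tau /= map_flatten -!map_comp; congr flatten.
apply/eq_in_map => m /masks_size Hm /=.
have Hm' : size m = size xs by rewrite Hm.
have Hn : size (map negb m) = size xs by rewrite size_map.
rewrite /Wd /= !map_rcons !mask_rcons ?size_map // !cats0 (mapK negbK) -cats1 -catA.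
f_equal; f_equal.
by rewrite rev_rcons !map_cat !rev_cat map_rev revK (mapK bar_invol) /=.
Qed.

Lemma chain_fold (rest xs : seq Y) :
  foldl (fun acc z => tau bar [seq rcons u z | u <- acc])
     (map (Wd bar xs) (masks (size xs))) rest =
  map (Wd bar (xs ++ rest)) (masks (size (xs ++ rest))).
Proof.
elim: rest xs => [|z rest IH] xs /=; first by rewrite cats0.
by rewrite chain_step // -(size_rcons xs z) IH cat_rcons.
Qed.

Lemma tau_chainE x rest :
  tau_chain bar x rest = map (Wd bar (x :: rest)) (masks (size rest).+1).
Proof.
rewrite /tau_chain.
have -> : tau bar [:: [:: x]] = map (Wd bar [:: x]) (masks (size [:: x])) by [].
by rewrite chain_fold.
Qed.
End Chain.

From mathcomp Require Import zify.
Import Order.TTheory.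

Section Perms.
Variable n : nat.
Local Notation N := n.+1.
Local Notation d0 := ((ord0 : 'I_N), false).

Definition F1 (t : seq bool) := filter (fun j : 'I_N => nth false t j) (enum 'I_N).
Definition F2 (t : seq bool) := filter (fun j : 'I_N => ~~ nth false t j) (enum 'I_N).
Definition Lsq (t : seq bool) : seq ('I_N * bool) :=
  rev [seq (j, true) | j <- F1 t] ++ [seq (j, false) | j <- F2 t].
Definition hf (t : seq bool) : {ffun 'I_N -> 'I_N * bool} :=
  [ffun i : 'I_N => nth d0 (Lsq t) i].
Definition gt (w : {ffun 'I_N -> 'I_N * bool}) : N.-tuple bool :=
  [tuple (i, true) \in codom w | i < N].

Lemma So : sorted (relpre val ltn) (enum 'I_N).
Proof. by rewrite -sorted_map val_enum_ord iota_ltn_sorted. Qed.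

Lemma relpre_trans : transitive (relpre (@nat_of_ord N) ltn).
Proof. by move=> a b c /= H1 H2; apply: ltn_trans H1 H2. Qed.

Lemma size_L t : size (Lsq t) = N.
Proof.
rewrite /Lsq size_cat size_rev !size_map !size_filter.
by rewrite (count_predC (fun j : 'I_N => nth false t j)) size_enum_ord.
Qed.

Lemma codom_hf t : codom (hf t) = Lsq t.
Proof.
rewrite codomE.
rewrite -[RHS](mkseq_nth d0) size_L /mkseq -val_enum_ord -map_comp.
by apply: eq_map => i; rewrite ffunE.
Qed.

Lemma uniq_fst t : uniq (map fst (Lsq t)).
Proof.
have -> : map fst (Lsq t) = rev (F1 t) ++ F2 t.
  rewrite /Lsq map_cat map_rev -!map_comp.
  by congr (rev _ ++ _); apply: map_id.
rewrite (perm_uniq (s2 := F1 t ++ F2 t)); last by rewrite perm_cat2r perm_rev.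
rewrite (perm_uniq (s2 := enum 'I_N)) ?enum_uniq //.
by rewrite /F1 /F2 (perm_filterC (fun j : 'I_N => nth false t j)).
Qed.

Lemma hf_signed t : signed_perm (hf t).
Proof.
apply/injectiveP => i j; rewrite !ffunE => E.
apply/val_inj/eqP.
rewrite -(nth_uniq (ord0 : 'I_N) _ _ (uniq_fst t)) ?size_map ?size_L ?ltn_ord //.
rewrite !(nth_map d0) ?size_L ?ltn_ord //; apply/eqP; exact: E.
Qed.

Lemma hf_incr t : increasing_sp (hf t).
Proof.
apply/forallP => i; apply/forallP => j; apply/implyP => lt.
rewrite !ffunE -!(nth_map d0 0 (@Defs.sval N)) ?size_L ?ltn_ord //.
have Hs : sorted <%R (map (@Defs.sval N) (Lsq t)).
  rewrite sorted_pairwise; last exact: lt_trans.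
  rewrite /Lsq map_cat pairwise_cat; apply/and3P; split.
  - apply/allrelP => a b; rewrite map_rev mem_rev.
    move=> /mapP [p /mapP [k _ ->] ->] /mapP [q /mapP [l _ ->] ->].
    rewrite /Defs.sval /=; lia.
  - rewrite -sorted_pairwise; last exact: lt_trans.
    rewrite map_rev rev_sorted -map_comp sorted_map.
    apply: (sub_sorted _ (sorted_filter relpre_trans _ So)).
    by move=> a b /= H; rewrite /Defs.sval /=; lia.
  - rewrite -sorted_pairwise; last exact: lt_trans.
    rewrite -map_comp sorted_map.
    apply: (sub_sorted _ (sorted_filter relpre_trans _ So)).
    by move=> a b /= H; rewrite /Defs.sval /=; lia.
apply: (sorted_ltn_nth lt_trans) => //; by rewrite inE size_map size_L.
Qed.

Lemma g_hf (t : N.-tuple bool) : gt (hf t) = t.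
Proof.
apply: eq_from_tnth => j; rewrite tnth_mktuple codom_hf /Lsq mem_cat mem_rev.
have -> : ((j, true) \in [seq (j0, false) | j0 <- F2 t]) = false.
  by apply/negbTE/mapP => -[k _ []].
rewrite orbF (mem_map (f := fun j0 : 'I_N => (j0, true))); last by move=> a b [].
by rewrite mem_filter mem_enum andbT (tnth_nth false).
Qed.

Lemma act_hf (Y : lmodType rat) (bar : Y -> Y) (y : 'I_N -> Y) (t : seq bool) :
  size t = N ->
  act_word bar y (hf t) = Wd bar (map y (enum 'I_N)) t.
Proof.
move=> Ht.
pose f (p : 'I_N * bool) := if p.2 then bar (y p.1) else y p.1.
have -> : act_word bar y (hf t) = map f (codom (hf t)) by rewrite codomE -map_comp.
have Ht' : map (fun j : 'I_N => nth false t j) (enum 'I_N) = t.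
  by rewrite -[RHS](mkseq_nth false) Ht /mkseq -val_enum_ord -map_comp.
have E1 : mask t (enum 'I_N) = F1 t by rewrite /F1 filter_mask Ht'.
have E2 : mask (map negb t) (enum 'I_N) = F2 t.
  by rewrite /F2 filter_mask (map_comp negb (fun j : 'I_N => nth false t j)) Ht'.
rewrite codom_hf /Wd -(map_mask y t) -(map_mask y (map negb t)). rewrite E1 E2 /Lsq map_cat map_rev -!map_comp. by [].
Qed.

Lemma codom_char (w : {ffun 'I_N -> 'I_N * bool}) j b :
  signed_perm w -> ((j, b) \in codom w) = (b == ((j, true) \in codom w)).
Proof.
move/injectiveP => inj; case: b => /=; first by case: ((j, true) \in codom w).
case Et: ((j, true) \in codom w) => /=.
  apply/negP => /codomP [i1 E1]; case/codomP: Et => i2 E2.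
  have e : i1 = i2 by apply: inj => /=; rewrite -E1 -E2.
  by subst i2; rewrite -E1 in E2.
have [g _ gK] := injF_bij inj.
have := gK j => /=; case Ew: (w (g j)) => [a bb] /= Ea; subst a.
have Hc : (j, bb) \in codom w by rewrite -Ew codom_f.
by case: bb Ew Hc => // _ Hc; rewrite Hc in Et.
Qed.

Lemma incr_sorted (w : {ffun 'I_N -> 'I_N * bool}) :
  increasing_sp w -> sorted <%R (map (@Defs.sval N) (codom w)).
Proof.
move=> H; rewrite codomE -map_comp sorted_map.
apply: (sub_sorted _ So) => a b /= lt.
by move/forallP: H => /(_ a) /forallP /(_ b) /implyP; apply.
Qed.

Lemma sval_inj : injective (@Defs.sval N).
Proof.
move=> [a ba] [c bc]; rewrite /Defs.sval /=.
case: ba; case: bc => E.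
- by have /val_inj -> : (a : nat) = c by lia.
- exfalso; lia.
- exfalso; lia.
- by have /val_inj -> : (a : nat) = c by lia.
Qed.

Lemma sp_unique (w w' : {ffun 'I_N -> 'I_N * bool}) :
  signed_perm w -> increasing_sp w -> signed_perm w' -> increasing_sp w' ->
  (forall j, ((j, true) \in codom w) = ((j, true) \in codom w')) -> w = w'.
Proof.
move=> sw iw sw' iw' H.
have Ec : codom w =i codom w'.
  by case=> j b; rewrite (codom_char w j b sw) (codom_char w' j b sw') H.
have Es : map (@Defs.sval N) (codom w) = map (@Defs.sval N) (codom w').
  apply: (irr_sorted_eq lt_trans ltxx); rewrite ?incr_sorted //.
  by move=> x; apply/mapP/mapP => -[p Hp ->]; exists p; rewrite ?Ec // -Ec.
have Ecod := inj_map sval_inj Es.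
apply/ffunP => i.
by move: Ecod; rewrite !codomE => /eq_in_map; apply; rewrite mem_enum.
Qed.

End Perms.

Theorem proposition8p7 (Y : lmodType rat) (bar : {linear Y -> Y})
  (bar_invol : involutive bar) (n : nat) (y : 'I_n.+1 -> Y) :
  forall (V : lmodType rat) (phi : seq Y -> V), multilinear_on n.+1 phi ->
    \sum_(w : {ffun 'I_n.+1 -> 'I_n.+1 * bool} | signed_perm w && increasing_sp w)
        phi (act_word bar y w)
    = \sum_(u <- tau_chain bar (y ord0) [seq y (lift ord0 i) | i <- enum 'I_n])
        phi u.
Proof.
move=> V phi _.
rewrite (reindex_onto (fun t : n.+1.-tuple bool => hf n t) (@gt n)); last first.
  move=> w /andP [sw iw]; apply: sp_unique => //; [exact: hf_signed | exact: hf_incr | ].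
  move=> j; have := congr1 (fun t => tnth t j) (@g_hf n (@gt n w)).
  by rewrite /= !tnth_mktuple.
rewrite (eq_bigl xpredT); last by move=> t; rewrite hf_signed hf_incr g_hf eqxx.
under eq_bigr => t _ do rewrite act_hf ?size_tuple //.
rewrite tau_chainE // size_map size_enum_ord.
have -> : y ord0 :: [seq y (lift ord0 i) | i <- enum 'I_n] = map y (enum 'I_n.+1).
  by rewrite enum_ordSl /= -map_comp.
rewrite big_map (perm_big (map val (index_enum {:n.+1.-tuple bool}))).
  by rewrite big_map.
apply: uniq_perm; first exact: masks_uniq.
  by rewrite (map_inj_uniq val_inj) index_enum_uniq.
move=> m; apply/idP/idP.
  move/masks_size/eqP => Hs; apply/mapP; exists (Tuple Hs) => //.
by case/mapP => t _ ->; apply: masks_mem; exact: size_tuple.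
Qed.
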